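(* Let $p,q\ge 1$ be integers with $p\neq q$ such that $q(2q-p-1)/(q-p)$ is a positive integer. Then the mixed extension of $P_3$ of type $\big(p,\,-q,\,q(2q-p-1)/(q-p)\big)$ and the mixed extension of $P_3$ of type $\big(-q,\,2q-1,\,p(2q-p-1)/(q-p)\big)$ are cospectral (have the same adjacency spectrum).
   Context: Let $P_3$ be the path with vertices $1,2,3$ and edges $\{1,2\},\{2,3\}$. For nonzero integers $t_1,t_2,t_3$, the mixed extension of $P_3$ of type $(t_1,t_2,t_3)$ is the graph whose vertex set is a disjoint union $V_1\cup V_2\cup V_3$ with $|V_i|=|t_i|$, where $V_i$ is a clique if $t_i>0$ and a coclique (independent set) if $t_i<0$, every vertex of $V_2$ is adjacent to every vertex of $V_1\cup V_3$, and there are no edges between $V_1$ and $V_3$. Two graphs are cospectral if their adjacency matrices have the same characteristic polynomial. *)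

(* Defs.v *)
From mathcomp Require Import all_boot all_order all_algebra.
Set Implicit Arguments. Unset Strict Implicit. Unset Printing Implicit Defensive.
Import Order.TTheory GRing.Theory Num.Theory.
Local Open Scope ring_scope.

(* Vertices of the mixed extension of P_3 of type (t1,t2,t3) are the ordinals
   0 .. |t1|+|t2|+|t3|-1; vertex i lies in V_1 (block 0) if i < |t1|,
   in V_2 (block 1) if |t1| <= i < |t1|+|t2|, and in V_3 (block 2) otherwise. *)
Definition mixed_block (a b : nat) (i : nat) : nat :=
  if (i < a)%N then 0%N else if (i < a + b)%N then 1%N else 2%N.

Definition block_is_clique (t1 t2 t3 : int) (k : nat) : bool :=
  if k == 0%N then 0 < t1 else if k == 1%N then 0 < t2 else 0 < t3.

Definition mixed_n (t1 t2 t3 : int) : nat := (`|t1| + `|t2| + `|t3|)%N.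

Definition mixed_adj_rel (t1 t2 t3 : int) (i j : 'I_(mixed_n t1 t2 t3)) : bool :=
  let bi := mixed_block `|t1| `|t2| i in
  let bj := mixed_block `|t1| `|t2| j in
  (i != j) &&
  (if bi == bj then block_is_clique t1 t2 t3 bi
   else (bi == 1%N) || (bj == 1%N)).

Definition mixed_adj (t1 t2 t3 : int) : 'M[int]_(mixed_n t1 t2 t3) :=
  \matrix_(i < mixed_n t1 t2 t3, j < mixed_n t1 t2 t3) (@mixed_adj_rel t1 t2 t3 i j)%:R.

Definition cospectral (m n : nat) (A : 'M[int]_m) (B : 'M[int]_n) : Prop :=
  char_poly A = char_poly B.

(* Main.v *)
Require Import Defs.
From mathcomp Require Import all_boot all_order all_algebra.
From mathcomp Require Import intdiv.
From mathcomp Require Import zify ring lra.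
Import Order.TTheory GRing.Theory Num.Theory.
Local Open Scope ring_scope.

Lemma sylvester (R : comNzRingType) m k (U : 'M[R]_(m, k)) (V : 'M[R]_(k, m)) :
  \det (1%:M - U *m V) = \det (1%:M - V *m U).
Proof.
pose M := block_mx (1%:M : 'M[R]_m) U V (1%:M : 'M[R]_k).
have E1 : block_mx 1%:M 0 (- V) 1%:M *m M = block_mx 1%:M U 0 (1%:M - V *m U).
  by rewrite /M mulmx_block !mulmx1 !mul1mx !mul0mx !addr0 addNr addrC mulNmx.
have E2 : block_mx 1%:M (- U) 0 1%:M *m M = block_mx (1%:M - U *m V) 0 V 1%:M.
  rewrite /M mulmx_block !mulmx1 !mul1mx !mul0mx !add0r addrN.
  by rewrite mulNmx.
have := congr1 determinant E1; rewrite det_mulmx det_lblock det_ublock !det1 !mul1r => h1.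
have := congr1 determinant E2; rewrite det_mulmx det_lblock det_ublock !det1 !mul1r mulr1 => h2.
by rewrite -h2 h1.
Qed.

Definition i0 : 'I_3 := @Ordinal 3 0 isT.
Definition i1 : 'I_3 := @Ordinal 3 1 isT.
Definition i2 : 'I_3 := @Ordinal 3 2 isT.

Lemma det33 (R : comNzRingType) (M : 'M[R]_3) :
  \det M = M i0 i0 * (M i1 i1 * M i2 i2 - M i1 i2 * M i2 i1)
         - M i0 i1 * (M i1 i0 * M i2 i2 - M i1 i2 * M i2 i0)
         + M i0 i2 * (M i1 i0 * M i2 i1 - M i1 i1 * M i2 i0).
Proof.
have EM : M = \matrix_(i, j) M (inord i) (inord j).
  by apply/matrixP=> i j; rewrite mxE !inord_val.
rewrite EM.
rewrite (expand_det_row _ i0) !big_ord_recl big_ord0 /cofactor.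
rewrite !(expand_det_row _ ord0) !big_ord_recl !big_ord0 /cofactor !det_mx11 !mxE /=.
rewrite /bump /=. ring. Qed.

Lemma ord3 (k : 'I_3) : k = i0 \/ k = i1 \/ k = i2.
Proof.
case: k => [[|[|[|m]]] Hm]; [left|right;left|right;right|done]; exact/val_inj.
Qed.

Lemma e01 : (i0 == i1) = false. Proof. by []. Qed.
Lemma e02 : (i0 == i2) = false. Proof. by []. Qed.
Lemma e10 : (i1 == i0) = false. Proof. by []. Qed.
Lemma e12 : (i1 == i2) = false. Proof. by []. Qed.
Lemma e20 : (i2 == i0) = false. Proof. by []. Qed.
Lemma e21 : (i2 == i1) = false. Proof. by []. Qed.
Definition eE := (e01, e02, e10, e12, e20, e21, eqxx).

Lemma mb_lt3 a b i : (mixed_block a b i < 3)%N.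
Proof. by rewrite /mixed_block; case: ifP => // _; case: ifP. Qed.

Section Mixed.
Variables t1 t2 t3 : int.
Local Notation a := `|t1|%N.
Local Notation b := `|t2|%N.
Local Notation c := `|t3|%N.
Local Notation n := (mixed_n t1 t2 t3).

Definition bo (i : 'I_n) : 'I_3 := Ordinal (mb_lt3 a b i).

Lemma big_blocks (R : Type) (idx : R) (op : Monoid.com_law idx) (F : 'I_3 -> R) :
  \big[op/idx]_(i < n) F (bo i) =
  op (op (\big[op/idx]_(i < a) F i0) (\big[op/idx]_(i < b) F i1))
     (\big[op/idx]_(i < c) F i2).
Proof.
rewrite /mixed_n big_split_ord big_split_ord /=.
congr (op (op _ _) _); apply: eq_bigr => i _; congr F; apply/val_inj => /=;
  rewrite /mixed_block; have := ltn_ord i.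
- by move=> ->.
- by move=> h; case: ltnP => h1; [lia|]; case: ltnP => h2 //; lia.
- by move=> h; case: ltnP => h1; [lia|]; case: ltnP => h2 //; lia.
Qed.

Lemma sum_blocks (R : nmodType) (F : 'I_3 -> R) :
  \sum_(i < n) F (bo i) = F i0 *+ a + F i1 *+ b + F i2 *+ c.
Proof. by rewrite big_blocks !sumr_const !card_ord. Qed.

Lemma prod_blocks (R : comRingType) (F : 'I_3 -> R) :
  \prod_(i < n) F (bo i) = F i0 ^+ a * F i1 ^+ b * F i2 ^+ c.
Proof. by rewrite big_blocks !prodr_const !card_ord. Qed.


Variable x : rat.
Hypothesis hx0 : x != 0.
Hypothesis hx1 : x + 1 != 0.

Definition cl (k : 'I_3) : rat := (block_is_clique t1 t2 t3 k)%:R.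
Definition dd k := x + cl k.
Definition nk (k : 'I_3) : nat := nth 0%N [:: a; b; c] k.
Definition ww k := (nk k)%:R / dd k.

Lemma dd_neq0 k : dd k != 0.
Proof. by rewrite /dd /cl; case: block_is_clique; rewrite ?addr0. Qed.

Definition Pm : 'M[rat]_(n, 3) := \matrix_(i, k) (bo i == k)%:R.
Definition Sm : 'M[rat]_3 := \matrix_(k, l)
  (if (k : nat) == l then block_is_clique t1 t2 t3 k
   else ((k : nat) == 1%N) || ((l : nat) == 1%N))%:R.
Definition Dm : 'M[rat]_n := diag_mx (\row_i dd (bo i)).
Definition Dinv : 'M[rat]_n := diag_mx (\row_i (dd (bo i))^-1).

Lemma sum_ind (f : 'I_3 -> rat) m : \sum_k (m == k)%:R * f k = f m.
Proof.
rewrite (bigD1 m) //= eqxx mul1r big1 ?addr0 // => k /negbTE.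
by rewrite eq_sym => ->; rewrite mul0r.
Qed.

Lemma sum_indr (f : 'I_3 -> rat) m : \sum_k f k * (m == k)%:R = f m.
Proof. by rewrite -[RHS](sum_ind f); apply: eq_bigr => k _; rewrite mulrC. Qed.

Lemma adj_decomp :
  x%:M - map_mx intr (mixed_adj t1 t2 t3) = Dm - Pm *m Sm *m Pm^T.
Proof.
apply/matrixP => i j; rewrite !mxE.
rewrite (eq_bigr (fun l => (Pm *m Sm) i l * (bo j == l)%:R)); last first.
  by move=> l _; rewrite !mxE.
rewrite sum_indr mxE (eq_bigr (fun k => (bo i == k)%:R * Sm k (bo j))); last first.
  by move=> k _; rewrite !mxE.
rewrite sum_ind mxE /mixed_adj_rel /=.
case: eqP => [<-|_] /=; rewrite ?eqxx.
  by rewrite /dd /cl mulr1n mulr1n subr0 addrK.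
by rewrite !mulr0n rmorph_nat.
Qed.

Lemma eval_char :
  (map_poly intr (char_poly (mixed_adj t1 t2 t3))).[x] =
  \det (x%:M - map_mx intr (mixed_adj t1 t2 t3)).
Proof.
rewrite map_char_poly /char_poly /char_poly_mx -[_.[x]]/(horner_eval x _).
rewrite -det_map_mx; congr determinant; apply/matrixP => i j.
by rewrite !mxE rmorphB /= !horner_evalE !hornerE hornerMn hornerX.
Qed.

Lemma DDinv : Dm *m Dinv = 1%:M.
Proof.
rewrite mulmx_diag; apply/matrixP => i j; rewrite !mxE mulfV //; exact: dd_neq0.
Qed.

Lemma W_diag : Pm^T *m Dinv *m Pm = diag_mx (\row_k ww k).
Proof.
apply/matrixP => k l; rewrite mul_mx_diag !mxE.
rewrite (eq_bigr (fun i => (bo i == k)%:R * (dd (bo i))^-1 * (bo i == l)%:R)); last first.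
  by move=> i _; rewrite !mxE.
rewrite (sum_blocks _ (fun m => (m == k)%:R * (dd m)^-1 * (m == l)%:R)).
rewrite /ww /nk.
case: (ord3 k) => [->|[->|->]]; case: (ord3 l) => [->|[->|->]]; rewrite !eE /=;
  rewrite ?mul0r ?mulr0 ?mul1r ?mulr1 ?mulr0n ?mulr1n ?add0r ?addr0 //;
  by rewrite ?mul0rn ?add0r ?addr0 // mulr_natl.
Qed.

Lemma key_det :
  \det (x%:M - map_mx intr (mixed_adj t1 t2 t3)) =
  dd i0 ^+ a * dd i1 ^+ b * dd i2 ^+ c * \det (1%:M - Sm *m diag_mx (\row_k ww k)).
Proof.
rewrite adj_decomp.
have -> : Dm - Pm *m Sm *m Pm^T = Dm *m (1%:M - (Dinv *m Pm) *m (Sm *m Pm^T)).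
  by rewrite mulmxBr mulmx1 !mulmxA DDinv mul1mx.
rewrite det_mulmx sylvester -W_diag !mulmxA.
congr (_ * _); rewrite det_diag (eq_bigr (fun i => dd (bo i))) ?prod_blocks //.
by move=> i _; rewrite mxE.
Qed.

Lemma char_formula :
  (map_poly intr (char_poly (mixed_adj t1 t2 t3))).[x] =
  dd i0 ^+ a * dd i1 ^+ b * dd i2 ^+ c *
  ((1 - cl i0 * ww i0) * ((1 - cl i1 * ww i1) * (1 - cl i2 * ww i2) - ww i1 * ww i2)
   - ww i0 * ww i1 * (1 - cl i2 * ww i2)).
Proof.
rewrite eval_char key_det mul_mx_diag det33 !mxE !eE /=.
rewrite /cl /=.
ring.
Qed.

End Mixed.

Lemma poly_eq_eval (P Q : {poly int}) :
  (forall k : nat, (map_poly intr P).[k.+1%:R] = (map_poly intr Q).[k.+1%:R] :> rat) ->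
  P = Q.
Proof.
move=> h; apply: (@map_inj_poly _ _ (intr : int -> rat)) => //; first exact: intr_inj.
apply/eqP; rewrite -subr_eq0; apply/negPn/negP => nz.
have := max_poly_roots (rs := [seq k.+1%:R | k <- iota 0 (size (map_poly intr P - map_poly intr Q : {poly rat}))]) nz.
rewrite size_map size_iota ltnn => H; suff : false by []; apply: H.
  by apply/allP => y /mapP [k _ ->]; rewrite /root hornerD hornerN h subrr.
rewrite map_inj_uniq ?iota_uniq // => i j /eqP; rewrite eqr_nat eqSS => /eqP //.
Qed.

Theorem proposition4 (p q : int) :
  1 <= p -> 1 <= q -> p != q ->
  (q - p %| q * (2 * q - p - 1))%Z ->
  0 < ((q * (2 * q - p - 1)) %/ (q - p))%Z ->
  cospectral (mixed_adj p (- q) (((q * (2 * q - p - 1)) %/ (q - p))%Z))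
             (mixed_adj (- q) (2 * q - 1) (((p * (2 * q - p - 1)) %/ (q - p))%Z)).
Proof.
move=> p1 q1 pq dvd rpos.
set r := ((q * (2 * q - p - 1)) %/ (q - p))%Z in rpos *.
set r' := ((p * (2 * q - p - 1)) %/ (q - p))%Z.
have qp0 : q - p != 0 by rewrite subr_eq0 eq_sym.
have hr : r * (q - p) = q * (2 * q - p - 1) by rewrite divzK.
have hr' : r' = r - (2 * q - p - 1).
  have e : p * (2 * q - p - 1) = (r - (2 * q - p - 1)) * (q - p).
    by rewrite mulrBl hr; ring.
  by rewrite /r' e mulzK.
have r'pos : 0 < r'.
  rewrite hr'; nia.
apply: poly_eq_eval => k.
set x : rat := k.+1%:R.
have hx0 : x != 0 by rewrite pnatr_eq0.
have hx1 : x + 1 != 0 by rewrite /x natr1 pnatr_eq0.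
rewrite (char_formula _ _ _ _ hx0 hx1) (char_formula _ _ _ _ hx0 hx1).
rewrite /ww /nk /dd /cl /block_is_clique /=.
have -> : (0 < p) = true by apply/idP; lia.
have -> : (0 < - q) = false by apply/negbTE; rewrite -leNgt; lia.
have -> : (0 < 2 * q - 1) = true by apply/idP; lia.
rewrite rpos r'pos abszN /= !addr0.
have e : (`|p| + `|r| = `|(2 * q - 1)%R| + `|r'|)%N by lia.
congr (_ * _).
  by rewrite mulrAC -exprD -mulrA -exprD e mulrC.
have np : `|p|%:R = p%:~R :> rat by rewrite natr_absz gtr0_norm //; lia.
have nq : `|q|%:R = q%:~R :> rat by rewrite natr_absz gtr0_norm //; lia.
have nr : `|r|%:R = r%:~R :> rat by rewrite natr_absz gtr0_norm.
have nr' : `|r'|%:R = r'%:~R :> rat by rewrite natr_absz gtr0_norm.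
have n2 : `|(2 * q - 1)%R|%:R = (2 * q - 1)%:~R :> rat by rewrite natr_absz gtr0_norm //; lia.
rewrite np nq nr nr' n2 hr'.
have hrR : r%:~R * (q%:~R - p%:~R) = q%:~R * (2 * q%:~R - p%:~R - 1) :> rat.
  by have := congr1 (intr : int -> rat) hr; rewrite !rmorphM !rmorphB /= !rmorphM /= rmorph1.
have qpR : q%:~R - p%:~R != 0 :> rat by rewrite -rmorphB intr_eq0.
have HR : r%:~R = q%:~R * (2 * q%:~R - p%:~R - 1) / (q%:~R - p%:~R) :> rat.
  by rewrite -hrR mulfK.
rewrite !rmorphB !rmorphM /= rmorph1 HR.
field.
have k0 : 0 <= k%:R :> rat := ler0n _ _.
rewrite qpR /=; apply/andP; split; apply: lt0r_neq0; lra.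
Qed.
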